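(* Let $m\geq1$ and, for $s\geq2$, set $G(m,s)=sm-\operatorname{zcl}_s(\mathbb{R}\mathrm{P}^m)$. Then $G(m,2)\geq G(m,3)\geq G(m,4)\geq\cdots\geq0$.
   Context: With mod $2$ cohomology, the $s$-th zero-divisors of $\mathbb{R}\mathrm{P}^m$ are the elements of the kernel of $\Delta_s^*\colon H^*((\mathbb{R}\mathrm{P}^m)^{\times s};\mathbb{Z}_2)\to H^*(\mathbb{R}\mathrm{P}^m;\mathbb{Z}_2)$ induced by the diagonal; $\operatorname{zcl}_s(\mathbb{R}\mathrm{P}^m)$ is the maximal number of $s$-th zero-divisors with nonzero product. *)

(* Defs.v *)
(* Mod-2 cohomology of (RP^m)^s is presented
   by Kuenneth as  F_2[x_1..x_s]/(x_1^{m+1},...,x_s^{m+1}); the diagonal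
   Delta_s^* sends every x_i to x in H^*(RP^m) = F_2[x]/(x^{m+1}). *)
From HB Require Import structures.
From mathcomp Require Import all_boot all_order all_algebra.
From mathcomp Require Import ssrAC.
From mathcomp Require Import mpoly.
From Stdlib Require Import ClassicalEpsilon.

Unset Implicit Arguments.
Unset Strict Implicit.
Unset Printing Implicit Defensive.

Import GRing.Theory.
Local Open Scope ring_scope.

(* An element of H^*((RP^m)^s;Z_2) is represented by a polynomial in
   {mpoly 'F_2[s]}; it is zero in the cohomology ring iff every monomial
   with all exponents <= m has coefficient 0. *)
Definition cohom_nonzero (m s : nat) (p : {mpoly 'F_2[s]}) : Prop :=
  exists mo : 'X_{1..s}, (forall i : 'I_s, (mo i <= m)%N) /\ p@_mo != 0.

(* Delta_s^* : x_i |-> x ; its image is zero in F_2[x]/(x^{m+1}) iff all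
   coefficients of degree <= m vanish. *)
Definition diag_star (s : nat) (p : {mpoly 'F_2[s]}) : {poly 'F_2} :=
  mmap (@polyC _) (fun _ => 'X) p.

Definition zero_divisor (m s : nat) (p : {mpoly 'F_2[s]}) : Prop :=
  forall i : nat, (i <= m)%N -> (diag_star s p)`_i = 0.

Definition has_zd_product (m s k : nat) : Prop :=
  exists f : 'I_k -> {mpoly 'F_2[s]},
    (forall j, zero_divisor m s (f j)) /\ cohom_nonzero m s (\prod_(j < k) f j).

Definition is_zcl (m s k : nat) : Prop :=
  has_zd_product m s k /\ forall k', has_zd_product m s k' -> (k' <= k)%N.

Definition zcl (m s : nat) : nat :=
  epsilon (inhabits 0%N) (fun k => is_zcl m s k).

Definition G (m s : nat) : int := (s * m)%:Z - (zcl m s)%:Z.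

(* Main.v *)
From HB Require Import structures.
From mathcomp Require Import all_boot all_order all_algebra.
From mathcomp Require Import mpoly.
From mathcomp Require Import zify.
From Stdlib Require Import ClassicalEpsilon Classical.
Require Import Defs.
Unset Implicit Arguments.
Import GRing.Theory.
Local Open Scope ring_scope.

Lemma mcoeffMX' n (p : {mpoly 'F_2[n]}) u k :
  (p * 'X_[u])@_k = if (u <= k)%MM then p@_(k - u)%MM else 0.
Proof.
case: ifP => h.
  by rewrite -{1}(submK h) addmC mcoeffMX.
apply/memN_msupp_eq0; rewrite (perm_mem (msuppMX _ _)); apply/negP=> /mapP [m' _ E].
by move: h; rewrite E lem_addr.
Qed.

Lemma diag_starE s c mu (p : {mpoly 'F_2[s]}) :
  diag_star s (c *: 'X_[mu] + p) = c%:P * 'X^(mdeg mu) + diag_star s p.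
Proof.
rewrite /diag_star mmapD mmapZ mmapX /mmap1 prodrXr -mdegE //.
Qed.

Lemma diag_star0 s (p : {mpoly 'F_2[s]}) : (diag_star s p)`_0 = p@_0%MM.
Proof.
elim/mpolyind: p => [|c mu p _ _ IH].
  by rewrite /diag_star mmap0 coef0 mcoeff0.
rewrite diag_starE coefD IH coefCM coefXn mcoeffD mcoeffZ mcoeffX.
by rewrite -mdeg_eq0 eq_sym.
Qed.

Lemma mdeg_widen s (mu : 'X_{1..s}) : mdeg (mnmwiden mu) = mdeg mu.
Proof.
by rewrite !mdegE big_ord_recr /= mnmwiden_ordmax addn0; apply: eq_bigr => i _; rewrite mnmwiden_widen.
Qed.

Lemma diag_star_widen s (p : {mpoly 'F_2[s]}) : diag_star s.+1 (mwiden p) = diag_star s p.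
Proof.
elim/mpolyind: p => [|c mu p _ _ IH].
  by rewrite /diag_star !mmap0 mwiden0 mmap0.
by rewrite mwidenD mwidenZ mwidenX !diag_starE IH mdeg_widen.
Qed.

Lemma two_F2 : (2%:R : {poly 'F_2}) = 0.
Proof. have ->: (2%:R : {poly 'F_2}) = (2%:R : 'F_2)%:P by rewrite rmorph_nat. have ->: (2%:R : 'F_2) = 0 by apply/val_inj. by rewrite polyC0. Qed.

Lemma diag_star_z s (i j : 'I_s) : diag_star s ('X_i + 'X_j) = 0.
Proof.
rewrite /diag_star mmapD !mmapX !mmap1U -mulr2n -mulr_natr two_F2 mulr0 //.
Qed.

Lemma key s (P : {mpoly 'F_2[s.+1]}) (j : nat) :
  let z : {mpoly 'F_2[s.+2]} := 'X_(ord_max) + 'X_(ord0) in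
  (forall mu : 'X_{1..s.+2}, (j < mu ord_max)%N -> (mwiden P * z ^+ j)@_mu = 0) /\
  (forall mo, (mwiden P * z ^+ j)@_(mnmwiden mo + U_(ord_max) *+ j)%MM = P@_mo).
Proof.
move=> z.
have ne0 : (ord0 : 'I_s.+2) != ord_max by rewrite -val_eqE.
elim: j => [|j [IH1 IH2]].
  split.
    move=> mu hmu; rewrite expr0 mulr1 (mwidenE (k := msize P)) // raddf_sum big1 //= => m _.
    rewrite mcoeffZ mcoeffX; case: eqP; last by rewrite mulr0.
    by move=> E; move: hmu; rewrite -E mnmwiden_ordmax.
  by move=> mo; rewrite expr0 mulr1 mulm0n addm0 mwiden_mnmwiden.
have Hmx : forall mu : 'X_{1..s.+2}, (mu - U_(ord_max))%MM ord_max = (mu ord_max).-1 :> nat.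
  by move=> mu; rewrite mnmBE mnm1E eqxx subn1.
have H0 : forall mu : 'X_{1..s.+2}, (mu - U_(ord0))%MM ord_max = mu ord_max :> nat.
  by move=> mu; rewrite mnmBE mnm1E (negbTE ne0) subn0.
split.
  move=> mu hmu; rewrite exprSr mulrA mulrDr mcoeffD !mcoeffMX'.
  have -> : (if (U_(ord_max) <= mu)%MM then (mwiden P * z ^+ j)@_(mu - U_(ord_max))%MM else 0) = 0.
    by case: ifP => _ //; rewrite IH1 // Hmx; lia.
  have -> : (if (U_(ord0) <= mu)%MM then (mwiden P * z ^+ j)@_(mu - U_(ord0))%MM else 0) = 0.
    by case: ifP => _ //; rewrite IH1 // H0; lia.
  by rewrite addr0.
move=> mo; rewrite exprSr mulrA mulrDr mcoeffD !mcoeffMX'.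
have -> : (U_(ord_max) <= mnmwiden mo + U_(ord_max) *+ j.+1)%MM.
  apply/mnm_lepP => i; rewrite mnmDE mulmnE !mnm1E; case: eqP => _ /=; lia.
have -> : (mnmwiden mo + U_(ord_max) *+ j.+1 - U_(ord_max) = mnmwiden mo + U_(ord_max) *+ j)%MM.
  apply/mnmP => i; rewrite mnmBE !mnmDE !mulmnE !mnm1E; case: eqP => _ /=; lia.
rewrite IH2; case: ifP => _; last by rewrite addr0.
rewrite IH1 ?addr0 // H0 mnmDE mulmnE mnm1E eqxx mnmwiden_ordmax; lia.
Qed.

Definition low s (p : {mpoly 'F_2[s]}) a := forall mu : 'X_{1..s}, (mdeg mu < a)%N -> p@_mu = 0.

Lemma lowM s (p q : {mpoly 'F_2[s]}) a b : low s p a -> low s q b -> low s (p * q) (a + b).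
Proof.
move=> hp hq mu hmu; rewrite mcoeffM big1 // => k /eqP E.
have : (mdeg k.1 + mdeg k.2 < a + b)%N by rewrite -mdegD -E.
case: (ltnP (mdeg k.1) a) => h1 h2; first by rewrite hp ?mul0r.
rewrite hq ?mulr0 //; move: h2; apply: contraTT; rewrite -!leqNgt => h3; exact: leq_add h1 h3.
Qed.

Lemma lowP s k (f : 'I_k -> {mpoly 'F_2[s]}) : (forall j, low s (f j) 1) -> low s (\prod_(j < k) f j) k.
Proof.
elim: k f => [|k IH] f hf.
  by move=> mu h; rewrite ltn0 in h.
rewrite big_ord_recr /=; rewrite -[X in low _ _ X]addn1.
apply: lowM => //; apply: IH => j; apply: hf.
Qed.

Lemma zd_low m s p : zero_divisor m s p -> low s p 1.
Proof.
move=> hz mu; rewrite ltnS leqn0 mdeg_eq0 => /eqP ->.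
by rewrite -diag_star0 hz.
Qed.

Lemma zd_bound m s k : has_zd_product m s k -> (k <= s * m)%N.
Proof.
case=> f [hz [mo [hmo hnz]]].
have hl := lowP s k f (fun j => zd_low _ _ _ (hz j)).
case: (ltnP (mdeg mo) k) => h; first by rewrite hl ?eqxx in hnz.
apply: (leq_trans h); rewrite mdegE.
apply: (@leq_trans (\sum_(i < s) m)%N); first by apply: leq_sum => i _; exact: hmo i.
by rewrite sum_nat_const card_ord.
Qed.

Lemma extend m s k : has_zd_product m s.+1 k -> has_zd_product m s.+2 (k + m).
Proof.
case=> f [hz [mo [hmo hnz]]].
pose z : {mpoly 'F_2[s.+2]} := 'X_(ord_max) + 'X_(ord0).
pose f' := fun j : 'I_(k + m) => match split j with inl a => mwiden (f a) | inr _ => z end.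
exists f'; split.
  move=> j i hi; rewrite /f'; case: (split j) => [a|_].
    by rewrite diag_star_widen hz.
  by rewrite diag_star_z coef0.
have -> : \prod_(j < k + m) f' j = mwiden (\prod_(j < k) f j) * z ^+ m.
  rewrite big_split_ord /= rmorph_prod /=.
  congr (_ * _).
    by apply: eq_bigr => i _; rewrite /f' (unsplitK (inl _ i)).
  rewrite (eq_bigr (fun _ => z)); last by move=> i _; rewrite /f' (unsplitK (inr _ i)).
  by rewrite prodr_const card_ord.
exists (mnmwiden mo + U_(ord_max) *+ m)%MM; split; last first.
  by have [_ ->] := key s (\prod_(j < k) f j) m.
move=> i; rewrite mnmDE mulmnE mnm1E.
case: (eqVneq ord_max i) => [<-|ne]; first by rewrite mnmwiden_ordmax mul1n.
have hi : (i < s.+1)%N.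
  have := ltn_ord i; rewrite ltnS leq_eqVlt => /orP [/eqP E|//].
  by move: ne; rewrite -val_eqE /= E eqxx.
have -> : i = widen_ord (leqnSn _) (Ordinal hi) by apply/val_inj.
by rewrite mnmwiden_widen mul0n addn0.
Qed.

Lemma max_ex (P : nat -> Prop) B : P 0%N -> (forall k, P k -> (k <= B)%N) ->
  exists K, P K /\ forall k, P k -> (k <= K)%N.
Proof.
elim: B => [|B IH] h0 hB.
  by exists 0%N; split => // k /hB.
case: (classic (P B.+1)) => hP.
  by exists B.+1; split.
apply: IH => // k hk; have := hB k hk; rewrite leq_eqVlt => /orP [/eqP E|//].
by rewrite E in hk.
Qed.

Lemma zd0 m s : has_zd_product m s 0.
Proof.
exists (fun _ => 0); split; first by case.
exists 0%MM; split; first by move=> i; rewrite mnm0E.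
by rewrite big_ord0 mcoeff1 eqxx oner_neq0.
Qed.

Lemma zcl_spec m s : is_zcl m s (zcl m s).
Proof.
rewrite /zcl; apply: epsilon_spec.
have [K [h1 h2]] := max_ex (has_zd_product m s) (s * m) (zd0 m s) (zd_bound m s).
by exists K.
Qed.

Theorem lemma4p3 (m : nat) : (1 <= m)%N ->
  (forall s : nat, (2 <= s)%N -> (G m s.+1 <= G m s)%R) /\
  (forall s : nat, (2 <= s)%N -> (0 <= G m s)%R).
Proof.
move=> _; split => s hs.
  case: s hs => [//|s] _.
  have [h1 _] := zcl_spec m s.+1.
  have [_ h2] := zcl_spec m s.+2.
  have := h2 _ (extend m s _ h1).
  rewrite /G; lia.
have [h1 _] := zcl_spec m s.
have := zd_bound _ _ _ h1.
rewrite /G; lia.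
Qed.
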